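(* Let $j_0<j_f$ and let $\phi^*=(\phi^*_{j_0},\dots,\phi^*_{j_f-1})$ be the slot allocation of an optimal schedule for $\mathcal{D}(\theta_{j_0},\theta_{j_f})$, i.e. $n\phi^*_j$ is the number of bits transmitted in slot $j$ by an admissible schedule achieving $\mathcal{D}(\theta_{j_0},\theta_{j_f})=n\sum_j\phi^*_j$, where bits of each slot are transmitted back-to-back from the earliest available time. For $t\in[\theta_{j_0},\theta_{j_0+1})$ define $$\hat{\mathcal{D}}(t,\theta_{j_f}):=\max\big\{0,\ n\lfloor\phi^*_{j_0}-R_{j_0}(t-\theta_{j_0})\rfloor\big\}+n\sum_{j=j_0+1}^{j_f-1}\phi^*_j.$$ Then $0\le\mathcal{D}(t,\theta_{j_f})-\hat{\mathcal{D}}(t,\theta_{j_f})\le n$.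
   Context: The channel is described by $R$ and $\bar p$, piecewise constant: there is a strictly increasing sequence $\{\theta_j\}_{j\ge0}$ with $R(t)=R_j>0$ and $\bar p(t)=\bar\pi_j\in\mathbb{Z}_{\ge0}$ for $t\in I_j:=(\theta_j,\theta_{j+1}]$; $n\in\mathbb{Z}_{>0}$. A transmission at time $t_k$ of $np_k$ bits ($p_k\in\mathbb{Z}_{\ge0}$) is admissible if $p_k\le\bar p(t_k)$; it is received after $\Delta(t_k,p_k):=p_k/R(t_k)$ time (worst case), and $t_{k+1}\ge t_k+\Delta(t_k,p_k)$, $t_1<t_2<\cdots$. The data capacity $\mathcal{D}(\tau_1,\tau_2)$ is the maximum over all admissible sequences of $n\sum_kp_k$, the sum over $k$ with $t_k\ge\tau_1$ and $t_k+\Delta(t_k,p_k)\le\tau_2$. *)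

(* Defs.v *)
From Stdlib Require Import Reals List.
Import ListNotations.
Open Scope R_scope.

(* A transmission: start time t_k, index of the slot I_j = (theta_j, theta_{j+1}]
   containing t_k (uniquely determined by t_k; checked by [tx_admissible]),
   and the integer p_k (n*p_k bits are sent). *)
Record tx : Type := mk_tx { tx_t : R; tx_slot : nat; tx_p : nat }.

Definition in_slot (theta : nat -> R) (t : R) (j : nat) : Prop :=
  theta j < t <= theta (S j).

Definition Delta (Rt : nat -> R) (x : tx) : R := INR (tx_p x) / Rt (tx_slot x).

Definition tx_end (Rt : nat -> R) (x : tx) : R := tx_t x + Delta Rt x.

Definition tx_admissible (theta : nat -> R) (pbar : nat -> nat) (x : tx) : Prop :=
  in_slot theta (tx_t x) (tx_slot x) /\ (tx_p x <= pbar (tx_slot x))%nat.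

Fixpoint ordered (Rt : nat -> R) (s : list tx) : Prop :=
  match s with
  | [] => True
  | x :: s' =>
      match s' with
      | [] => True
      | y :: _ => tx_t x < tx_t y /\ tx_end Rt x <= tx_t y
      end /\ ordered Rt s'
  end.

Definition admissible (theta Rt : nat -> R) (pbar : nat -> nat) (s : list tx) : Prop :=
  Forall (tx_admissible theta pbar) s /\ ordered Rt s.

Definition in_windowb (Rt : nat -> R) (tau1 tau2 : R) (x : tx) : bool :=
  if Rle_dec tau1 (tx_t x) then
    if Rle_dec (tx_end Rt x) tau2 then true else false
  else false.

Definition window (Rt : nat -> R) (tau1 tau2 : R) (s : list tx) : list tx :=
  filter (in_windowb Rt tau1 tau2) s.

Definition bits (s : list tx) : nat :=
  fold_right (fun x a => (tx_p x + a)%nat) 0%nat s.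

Definition is_data_capacity (theta Rt : nat -> R) (pbar : nat -> nat) (n : nat)
  (tau1 tau2 : R) (D : nat) : Prop :=
  (exists s, admissible theta Rt pbar s /\ D = (n * bits (window Rt tau1 tau2 s))%nat) /\
  (forall s, admissible theta Rt pbar s -> (n * bits (window Rt tau1 tau2 s) <= D)%nat).

Definition slot_bits (Rt : nat -> R) (tau1 tau2 : R) (s : list tx) (j : nat) : nat :=
  bits (filter (fun x => Nat.eqb (tx_slot x) j) (window Rt tau1 tau2 s)).

Fixpoint back_to_back (Rt : nat -> R) (w : list tx) : Prop :=
  match w with
  | [] => True
  | x :: w' =>
      match w' with
      | [] => True
      | y :: _ => (tx_slot x = tx_slot y -> tx_t y = tx_end Rt x)
      end /\ back_to_back Rt w'
  end.

Definition sum_range (phi : nat -> nat) (a b : nat) : nat :=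
  fold_right (fun j acc => (phi j + acc)%nat) 0%nat (seq a (b - a)).

Definition optimal_slot_allocation (theta Rt : nat -> R) (pbar : nat -> nat) (n : nat)
  (j0 jf : nat) (phi : nat -> nat) : Prop :=
  exists s,
    admissible theta Rt pbar s /\
    is_data_capacity theta Rt pbar n (theta j0) (theta jf)
      (n * bits (window Rt (theta j0) (theta jf) s))%nat /\
    bits (window Rt (theta j0) (theta jf) s) = sum_range phi j0 jf /\
    (forall j, (j0 <= j < jf)%nat -> phi j = slot_bits Rt (theta j0) (theta jf) s j) /\
    back_to_back Rt (window Rt (theta j0) (theta jf) s).

(* \hat D(t, theta_{jf}); Int_part is the floor function. *)
Definition D_hat (theta Rt : nat -> R) (n j0 jf : nat) (phi : nat -> nat) (t : R) : R :=
  Rmax 0 (INR n * IZR (Int_part (INR (phi j0) - Rt j0 * (t - theta j0))))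
  + INR n * INR (sum_range phi (S j0) jf).

(* Main.v *)
Require Import Defs.
From Stdlib Require Import Reals List Sorted Lra Lia ZArith Classical.
Import ListNotations.
Open Scope R_scope.

Definition rel (Rt : nat -> R) (x y : tx) : Prop :=
  tx_t x < tx_t y /\ tx_end Rt x <= tx_t y.

Lemma rel_trans Rt : Relations_1.Transitive (rel Rt).
Proof. intros x y z [H1 H2] [H3 H4]; split; lra. Qed.

Lemma ordered_Sorted Rt l : ordered Rt l <-> Sorted (rel Rt) l.
Proof.
  induction l as [|x l IH]; simpl.
  - split; auto.
  - destruct l as [|y l'].
    + split; intros; auto; repeat constructor.
    + split.
      * intros [H1 H2]. constructor. apply IH; auto. constructor. exact H1.
      * intros H. inversion H; subst. split. inversion H3; subst; auto.
        apply IH; auto.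
Qed.

Lemma ordered_SS Rt l : ordered Rt l <-> StronglySorted (rel Rt) l.
Proof.
  rewrite ordered_Sorted. split.
  - apply Sorted_StronglySorted, rel_trans.
  - apply StronglySorted_Sorted.
Qed.

Lemma SS_filter {A} (P : A -> A -> Prop) f l :
  StronglySorted P l -> StronglySorted P (filter f l).
Proof.
  induction l as [|x l IH]; simpl; intros H; auto.
  apply StronglySorted_inv in H as [H1 H2].
  destruct (f x); auto. constructor; auto.
  rewrite Forall_forall in *. intros y Hy. apply filter_In in Hy. apply H2; tauto.
Qed.

Lemma SS_app {A} (P : A -> A -> Prop) l1 l2 :
  StronglySorted P l1 -> StronglySorted P l2 ->
  (forall x y, In x l1 -> In y l2 -> P x y) -> StronglySorted P (l1 ++ l2).
Proof.
  induction l1 as [|x l IH]; simpl; intros H1 H2 H3; auto.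
  apply StronglySorted_inv in H1 as [H4 H5]. constructor.
  apply IH; auto. apply Forall_app; split; auto.
  rewrite Forall_forall; intros; apply H3; auto.
Qed.

Lemma SS_pair Rt l x y : StronglySorted (rel Rt) l -> In x l -> In y l ->
  tx_t x < tx_t y -> rel Rt x y.
Proof.
  induction l as [|a l IH]; simpl; intros H Hx Hy Hlt; [contradiction|].
  apply StronglySorted_inv in H as [H1 H2]. rewrite Forall_forall in H2.
  destruct Hx as [<-|Hx]; destruct Hy as [<-|Hy].
  - lra.
  - apply H2; auto.
  - destruct (H2 x Hx) as [H3 _]. lra.
  - apply IH; auto.
Qed.

Lemma bits_app l1 l2 : bits (l1 ++ l2) = (bits l1 + bits l2)%nat.
Proof. induction l1; simpl; lia. Qed.

Lemma bits_filter_mono f g l : (forall x, f x = true -> g x = true) ->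
  (bits (filter f l) <= bits (filter g l))%nat.
Proof.
  intros H; induction l as [|x l IH]; simpl; auto.
  destruct (f x) eqn:E. rewrite (H x E). simpl; lia.
  destruct (g x); simpl; lia.
Qed.

Lemma filter_all {A} (f : A -> bool) l : (forall x, In x l -> f x = true) -> filter f l = l.
Proof.
  induction l as [|x l IH]; simpl; intros H; auto.
  rewrite H by auto. f_equal. apply IH; auto.
Qed.

Lemma filter_filter' {A} (f g : A -> bool) l :
  filter f (filter g l) = filter (fun x => andb (g x) (f x)) l.
Proof.
  induction l as [|x l IH]; simpl; auto.
  destruct (g x); simpl; auto. destruct (f x); simpl; congruence.
Qed.

Lemma bits_zero l : (forall x, In x l -> tx_p x = 0%nat) -> bits l = 0%nat.
Proof.
  induction l as [|x l IH]; simpl; intros H; auto. rewrite H, IH; auto.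
Qed.

Definition sumL (f : nat -> nat) (L : list nat) : nat :=
  fold_right (fun j acc => (f j + acc)%nat) 0%nat L.

Lemma sumL_plus f g L : sumL (fun j => f j + g j)%nat L = (sumL f L + sumL g L)%nat.
Proof. induction L; simpl; lia. Qed.

Lemma sumL_ext f g L : (forall j, In j L -> f j = g j) -> sumL f L = sumL g L.
Proof. induction L; simpl; intros H; [reflexivity|]. rewrite (H a), IHL; auto. Qed.

Lemma sumL_ind c p a m :
  sumL (fun j => if Nat.eqb c j then p else 0%nat) (seq a m)
  = if andb (Nat.leb a c) (Nat.ltb c (a + m)) then p else 0%nat.
Proof.
  revert a; induction m as [|m IH]; intros a; simpl.
  - destruct (Nat.leb_spec a c), (Nat.ltb_spec c (a + 0)); simpl; auto; lia.
  - rewrite IH.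
    destruct (Nat.eqb_spec c a), (Nat.leb_spec a c), (Nat.ltb_spec c (a + S m)),
      (Nat.leb_spec (S a) c), (Nat.ltb_spec c (S (a + m))), (Nat.ltb_spec c (S a + m)); simpl; lia.
Qed.

Lemma partition_le l a m :
  (sumL (fun j => bits (filter (fun x => Nat.eqb (tx_slot x) j) l)) (seq a m) <= bits l)%nat.
Proof.
  induction l as [|x l IH]; simpl.
  - induction (seq a m); simpl; lia.
  - rewrite (sumL_ext _ (fun j => (if Nat.eqb (tx_slot x) j then tx_p x else 0%nat)
          + bits (filter (fun x => Nat.eqb (tx_slot x) j) l))%nat).
    + rewrite sumL_plus, sumL_ind.
      destruct (andb (Nat.leb a (tx_slot x)) (Nat.ltb (tx_slot x) (a + m))); lia.
    + intros j _. destruct (Nat.eqb (tx_slot x) j); simpl; lia.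
Qed.

Lemma ex_max (P : nat -> Prop) B : (exists b, P b) -> (forall b, P b -> (b <= B)%nat) ->
  exists b, P b /\ forall b', P b' -> (b' <= b)%nat.
Proof.
  revert P. induction B as [|B IH]; intros P [b Hb] HB.
  - exists b; split; auto. intros b' Hb'. pose proof (HB b' Hb'). pose proof (HB b Hb). lia.
  - destruct (classic (P (S B))) as [H|H].
    + exists (S B); split; auto.
    + apply IH. exists b; auto. intros b' Hb'. specialize (HB b' Hb').
      destruct (Nat.eq_dec b' (S B)); [subst; contradiction | lia].
Qed.

Lemma Int_part_unique r z : IZR z <= r < IZR z + 1 -> Int_part r = z.
Proof.
  intros [H1 H2]. destruct (base_Int_part r) as [H3 H4].
  assert (A : IZR (Int_part r - z) < 1) by (rewrite minus_IZR; lra).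
  assert (B : IZR (Int_part r - z) > -1) by (rewrite minus_IZR; lra).
  apply lt_IZR in A. apply lt_IZR in B. lia.
Qed.

Lemma Int_part_ge r z : IZR z <= r -> (z <= Int_part r)%Z.
Proof.
  intros H. destruct (base_Int_part r) as [H3 H4].
  assert (A : IZR (z - Int_part r) < 1) by (rewrite minus_IZR; lra).
  apply lt_IZR in A. lia.
Qed.

Lemma div_le_helper c a b : 0 < c -> a <= c * b -> a / c <= b.
Proof.
  intros Hc H. unfold Rdiv. apply Rmult_le_reg_l with c; auto.
  replace (c * (a * / c)) with a by (field; lra). exact H.
Qed.

Lemma in_windowb_iff Rt a b x : in_windowb Rt a b x = true <-> a <= tx_t x /\ tx_end Rt x <= b.
Proof.
  unfold in_windowb. destruct (Rle_dec a (tx_t x)), (Rle_dec (tx_end Rt x) b);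
  split; intros; try tauto; try discriminate; try (exfalso; tauto).
Qed.

Lemma theta_mono (theta : nat -> R) : (forall j, theta j < theta (S j)) ->
  forall i j, (i <= j)%nat -> theta i <= theta j.
Proof.
  intros H i j Hij. induction Hij. lra. specialize (H m). lra.
Qed.

Fixpoint units (c : R) (j : nat) (a : R) (k : nat) : list tx :=
  match k with O => [] | S k' => mk_tx a j 1 :: units c j (a + 1 / c) k' end.

Lemma units_bits c j a k : bits (units c j a k) = k.
Proof. revert a; induction k; intros a; simpl; [reflexivity|]. rewrite IHk; reflexivity. Qed.

Lemma units_In c j a k x : 0 < c -> In x (units c j a k) ->
  tx_slot x = j /\ tx_p x = 1%nat /\ a <= tx_t x /\ tx_t x + 1 / c <= a + INR k / c.
Proof.
  intros Hc. revert a; induction k as [|k IH]; intros a; cbn [units In]; [tauto|].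
  assert (0 < 1 / c) by (apply Rdiv_lt_0_compat; lra).
  assert (0 <= INR k / c) by (unfold Rdiv; apply Rmult_le_pos; [apply pos_INR| left; apply Rinv_0_lt_compat; lra]).
  assert (E : INR (S k) / c = INR k / c + 1 / c) by (rewrite S_INR; field; lra).
  intros [<-|Hx]; simpl tx_slot; simpl tx_p; simpl tx_t.
  - rewrite E. repeat split; auto; lra.
  - destruct (IH _ Hx) as (H1 & H2 & H3 & H4). rewrite E. repeat split; auto; lra.
Qed.

Lemma units_end Rt j x : tx_slot x = j -> tx_p x = 1%nat -> tx_end Rt x = tx_t x + 1 / Rt j.
Proof. intros H1 H2. unfold tx_end, Defs.Delta. rewrite H2, H1. reflexivity. Qed.

Lemma units_ordered Rt j a k : 0 < Rt j -> ordered Rt (units (Rt j) j a k).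
Proof.
  intros Hc. revert a; induction k as [|k IH]; intros a; simpl; auto.
  split; auto. destruct k; simpl; auto.
  assert (0 < 1 / Rt j) by (apply Rdiv_lt_0_compat; lra).
  unfold tx_end, Defs.Delta; simpl. split; lra.
Qed.

Lemma telescope Rt j l : 0 < Rt j -> Forall (fun x => tx_slot x = j) l ->
  StronglySorted (rel Rt) l -> l <> [] ->
  forall a, (forall x, In x l -> a <= tx_t x) ->
  exists y, In y l /\ INR (bits l) <= Rt j * (tx_t y - a) + INR (tx_p y).
Proof.
  intros Hc. induction l as [|x l IH]; intros Hsl Hss Hne a Ha; [congruence|].
  apply StronglySorted_inv in Hss as [Hss Hfa].
  inversion Hsl; subst.
  assert (Hax : a <= tx_t x) by (apply Ha; simpl; auto).
  destruct l as [|x' l'].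
  - exists x; split; simpl; auto. rewrite plus_INR. simpl.
    assert (0 <= Rt (tx_slot x) * (tx_t x - a)) by (apply Rmult_le_pos; lra). lra.
  - destruct (IH H2 Hss ltac:(congruence) (tx_end Rt x)) as [y [Hy Hb]].
    { intros z Hz. rewrite Forall_forall in Hfa. apply Hfa; auto. }
    exists y; split; simpl; auto.
    change (INR (tx_p x + bits (x' :: l'))) with (INR (tx_p x + bits (x'::l'))).
    rewrite plus_INR.
    unfold tx_end, Defs.Delta in Hb.
    assert (E : Rt (tx_slot x) * (tx_t y - (tx_t x + INR (tx_p x) / Rt (tx_slot x)))
               = Rt (tx_slot x) * (tx_t y - tx_t x) - INR (tx_p x)) by (field; lra).
    rewrite E in Hb.
    assert (Rt (tx_slot x) * (tx_t x - a) >= 0) by (apply Rle_ge, Rmult_le_pos; lra).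
    assert (E2 : Rt (tx_slot x) * (tx_t y - a) = Rt (tx_slot x) * (tx_t y - tx_t x) + Rt (tx_slot x) * (tx_t x - a)) by ring.
    simpl bits in Hb |- *. lra.
Qed.

Lemma div_lt_helper c a b : 0 < c -> a < c * b -> a / c < b.
Proof.
  intros Hc H. unfold Rdiv. apply Rmult_lt_reg_l with c; auto.
  replace (c * (a * / c)) with a by (field; lra). exact H.
Qed.

Theorem proposition2
  (theta Rt : nat -> R) (pbar : nat -> nat) (n : nat)
  (Htheta : forall j, theta j < theta (S j))
  (HR : forall j, 0 < Rt j)
  (Hn : (0 < n)%nat)
  (j0 jf : nat) (Hj : (j0 < jf)%nat)
  (phi : nat -> nat)
  (Hphi : optimal_slot_allocation theta Rt pbar n j0 jf phi)
  (t : R) (Ht : theta j0 <= t < theta (S j0)) :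
  (exists D, is_data_capacity theta Rt pbar n t (theta jf) D) /\
  (forall D, is_data_capacity theta Rt pbar n t (theta jf) D ->
     0 <= INR D - D_hat theta Rt n j0 jf phi t /\
     INR D - D_hat theta Rt n j0 jf phi t <= INR n).
Proof.
  destruct Hphi as (s & Hadm & Hcap & Hbits & Hslot & _).
  set (w := window Rt (theta j0) (theta jf) s) in *.
  set (phi0 := phi j0).
  set (Srest := sum_range phi (S j0) jf).
  assert (Hsplit : bits w = (phi0 + Srest)%nat).
  { rewrite Hbits. unfold sum_range, phi0, Srest.
    replace (jf - j0)%nat with (S (jf - S j0)) by lia. reflexivity. }
  assert (Hmono := theta_mono theta Htheta).
  assert (UB : forall s', admissible theta Rt pbar s' ->
             (bits (window Rt (theta j0) (theta jf) s') <= bits w)%nat).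
  { intros s' Hs'. destruct Hcap as [_ Hc]. specialize (Hc s' Hs').
    apply Nat.mul_le_mono_pos_l in Hc; auto. }
  assert (Wsub : forall s', (bits (window Rt t (theta jf) s')
                 <= bits (window Rt (theta j0) (theta jf) s'))%nat).
  { intros s'. unfold window. apply bits_filter_mono. intros x. rewrite !in_windowb_iff. lra. }
  assert (Adm_filter : forall s' f, admissible theta Rt pbar s' ->
             admissible theta Rt pbar (filter f s')).
  { intros s' f [H1 H2]. split.
    - rewrite Forall_forall in *. intros x Hx; apply filter_In in Hx; apply H1; tauto.
    - apply ordered_SS. apply SS_filter. apply ordered_SS; auto. }
  split.
  { destruct (ex_max (fun b => exists s', admissible theta Rt pbar s' /\
                 b = bits (window Rt t (theta jf) s')) (bits w)) as [b [[s' [Hs' Hb]] Hmax]].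
    - exists 0%nat, []. split; [split; [constructor| exact I] | reflexivity].
    - intros b [s' [Hs' ->]]. eapply Nat.le_trans; [apply Wsub| apply UB; auto].
    - exists (n * b)%nat. split.
      + exists s'; split; auto; rewrite Hb; auto.
      + intros s2 Hs2. apply Nat.mul_le_mono_l. apply Hmax. exists s2; auto. }
  intros D [[s1 [Hs1 HD]] HmaxD].
  unfold D_hat. fold phi0 Srest.
  set (R0 := Rt j0) in *.
  assert (HR0 : 0 < R0) by apply HR.
  set (x := R0 * (t - theta j0)).
  assert (Hx0 : 0 <= x) by (apply Rmult_le_pos; lra).
  set (F := Int_part (INR phi0 - x)).
  destruct (base_Int_part (INR phi0 - x)) as [HF1 HF2]. fold F in HF1, HF2.
  assert (Hsadm : forall u, In u s -> tx_admissible theta pbar u).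
  { intros u Hu. destruct Hadm as [H1 _]. rewrite Forall_forall in H1. auto. }
  assert (Hwin : forall u, In u w -> In u s /\ theta j0 <= tx_t u /\ tx_end Rt u <= theta jf).
  { intros u Hu. unfold w, window in Hu. apply filter_In in Hu as [H1 H2].
    apply in_windowb_iff in H2. tauto. }
  assert (SSw : StronglySorted (rel Rt) w).
  { apply SS_filter. apply ordered_SS. apply Hadm. }
  set (W0 := filter (fun u => Nat.eqb (tx_slot u) j0) w).
  assert (HphiW0 : phi0 = bits W0).
  { unfold phi0. rewrite Hslot by lia. reflexivity. }
  assert (Hpbar0 : pbar j0 = 0%nat -> phi0 = 0%nat).
  { intros Hp. rewrite HphiW0. apply bits_zero. intros u Hu.
    unfold W0 in Hu. apply filter_In in Hu as [H1 H2]. apply Nat.eqb_eq in H2.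
    destruct (Hsadm u (proj1 (Hwin u H1))) as [_ H3]. rewrite H2, Hp in H3. lia. }
  assert (Htf : t <= theta jf) by (pose proof (Hmono (S j0) jf Hj); lra).
  split.
  - assert (Hn0 : 0 < INR n) by (apply lt_0_INR; lia).
    assert (HDge : forall s', admissible theta Rt pbar s' ->
              INR n * INR (bits (window Rt t (theta jf) s')) <= INR D).
    { intros s' Hs'. rewrite <- mult_INR. apply le_INR. apply HmaxD; auto. }
    destruct (Req_dec t (theta j0)) as [Heq|Hneq].
    +
      pose proof (HDge s Hadm) as H1. rewrite Heq in H1. fold w in H1.
      rewrite Hsplit, plus_INR in H1.
      assert (HF : F = Z.of_nat phi0).
      { unfold F. apply Int_part_unique. rewrite <- INR_IZR_INZ.
        unfold x. rewrite Heq. replace (theta j0 - theta j0) with 0 by ring. lra. }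
      rewrite HF, <- INR_IZR_INZ.
      rewrite Rmax_right by (apply Rmult_le_pos; [lra | apply pos_INR]).
      lra.
    + assert (Htgt : theta j0 < t) by lra.
      set (rest := filter (fun u => Nat.ltb j0 (tx_slot u)) w).
      assert (Hrest : forall z, In z rest -> In z w /\ theta (S j0) < tx_t z /\ tx_end Rt z <= theta jf).
      { intros z Hz. unfold rest in Hz. apply filter_In in Hz as [H1 H2].
        apply Nat.ltb_lt in H2. destruct (Hwin z H1) as (H3 & H4 & H5).
        destruct (Hsadm z H3) as [[H6 H7] _].
        pose proof (Hmono (S j0) (tx_slot z) H2). repeat split; auto; lra. }
      assert (HSrest : (Srest <= bits rest)%nat).
      { unfold Srest, sum_range. change (fold_right (fun j acc => (phi j + acc)%nat) 0%nat
            (seq (S j0) (jf - S j0))) with (sumL phi (seq (S j0) (jf - S j0))).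
        rewrite (sumL_ext _ (fun j => bits (filter (fun u => Nat.eqb (tx_slot u) j) rest))).
        - apply partition_le.
        - intros j Hjin. apply in_seq in Hjin. rewrite Hslot by lia.
          unfold slot_bits. fold w. unfold rest. rewrite filter_filter'.
          f_equal. apply filter_ext_in. intros u _.
          destruct (Nat.ltb_spec j0 (tx_slot u)), (Nat.eqb_spec (tx_slot u) j); simpl; auto; lia. }
      assert (Hlow : forall C, Forall (tx_admissible theta pbar) C ->
                StronglySorted (rel Rt) C ->
                (forall u, In u C -> t <= tx_t u /\ tx_end Rt u <= theta jf) ->
                (forall u z, In u C -> In z rest -> rel Rt u z) ->
                INR n * (INR (bits C) + INR (bits rest)) <= INR D).
      { intros C HC1 HC2 HC3 HC4.
        assert (Had : admissible theta Rt pbar (C ++ rest)).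
        { split.
          - apply Forall_app; split; auto. rewrite Forall_forall. intros z Hz.
            apply Hsadm. apply Hwin. apply Hrest; auto.
          - apply ordered_SS. apply SS_app; auto. unfold rest. apply SS_filter; auto. }
        pose proof (HDge _ Had) as H1.
        unfold window in H1. rewrite (filter_all _ (C ++ rest)) in H1.
        - rewrite bits_app, plus_INR in H1. exact H1.
        - intros u Hu. apply in_windowb_iff. apply in_app_or in Hu as [Hu|Hu].
          + apply HC3; auto.
          + destruct (Hrest u Hu) as (_ & H2 & H3). lra. }
      assert (HSr : INR Srest <= INR (bits rest)) by (apply le_INR; auto).
      destruct (Z_le_gt_dec F 0) as [HF0|HF0].
      * assert (Hl := Hlow [] ltac:(constructor) ltac:(constructor)
                  ltac:(intros u []) ltac:(intros u z [])).
        simpl bits in Hl.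
        rewrite Rmax_left.
        2:{ assert (IZR F <= 0) by (apply IZR_le; lia).
            assert (INR n * IZR F <= INR n * 0) by (apply Rmult_le_compat_l; lra). lra. }
        assert (INR n * INR Srest <= INR n * INR (bits rest)) by (apply Rmult_le_compat_l; lra).
        simpl INR in Hl. lra.
      * set (k := Z.to_nat F).
        assert (Hk : INR k = IZR F) by (rewrite INR_IZR_INZ; f_equal; unfold k; lia).
        assert (HFge1 : 1 <= IZR F) by (apply IZR_le; lia).
        rewrite Rmax_right by (apply Rmult_le_pos; lra).
        assert (Hphi1 : (phi0 >= 1)%nat).
        { destruct phi0 eqn:E; [|lia]. simpl INR in HF1. lra. }
        assert (HW0ne : W0 <> []).
        { intros HE. rewrite HE in HphiW0. simpl in HphiW0. lia. }
        assert (Hpb : (pbar j0 >= 1)%nat).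
        { destruct (Nat.eq_dec (pbar j0) 0) as [E|E]; [specialize (Hpbar0 E); lia | lia]. }
        assert (HW0 : forall u, In u W0 -> In u w /\ tx_slot u = j0).
        { intros u Hu. unfold W0 in Hu. apply filter_In in Hu as [H1 H2].
          apply Nat.eqb_eq in H2. auto. }
        destruct (telescope Rt j0 W0 HR0) with (a := theta j0) as [y [Hy Hyb]].
        { rewrite Forall_forall. intros u Hu. apply HW0; auto. }
        { unfold W0. apply SS_filter; auto. }
        { exact HW0ne. }
        { intros u Hu. apply Hwin. apply HW0; auto. }
        rewrite <- HphiW0 in Hyb. fold R0 in Hyb.
        destruct (HW0 y Hy) as [Hyw Hys].
        destruct (Hwin y Hyw) as (Hys' & Hyt0 & Hyend).
        destruct (Hsadm y Hys') as [[Hsl1 Hsl2] Hpy].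
        rewrite Hys in Hsl1, Hsl2, Hpy.
        assert (Hend_y : tx_end Rt y = tx_t y + INR (tx_p y) / R0).
        { unfold tx_end, Defs.Delta. rewrite Hys. reflexivity. }
        assert (Hpy0 : 0 <= INR (tx_p y) / R0).
        { unfold Rdiv. apply Rmult_le_pos; [apply pos_INR | left; apply Rinv_0_lt_compat; lra]. }
        assert (Hyz : forall z, In z rest -> tx_t y < tx_t z /\ tx_end Rt y <= tx_t z).
        { intros z Hz. destruct (Hrest z Hz) as (H1 & H2 & H3).
          apply (SS_pair Rt w); auto. lra. }
        assert (HFy : IZR F <= R0 * (tx_t y - t) + INR (tx_p y)).
        { assert (E : R0 * (tx_t y - theta j0) = R0 * (tx_t y - t) + x) by (unfold x; ring).
          lra. }
        assert (HC : exists C, Forall (tx_admissible theta pbar) C /\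
                StronglySorted (rel Rt) C /\
                (forall u, In u C -> t <= tx_t u /\ tx_end Rt u <= theta jf) /\
                (forall u z, In u C -> In z rest -> rel Rt u z) /\ (k <= bits C)%nat).
        { destruct (Rle_lt_dec t (tx_t y)) as [HA|HB].
          -
            set (G := Int_part (R0 * (tx_t y - t))).
            assert (HG0 : (0 <= G)%Z).
            { apply Int_part_ge. simpl. apply Rmult_le_pos; lra. }
            assert (HFG : (F - Z.of_nat (tx_p y) <= G)%Z).
            { apply Int_part_ge. rewrite minus_IZR, <- INR_IZR_INZ. lra. }
            destruct (base_Int_part (R0 * (tx_t y - t))) as [HG1 _]. fold G in HG1.
            set (m := Z.to_nat G).
            assert (Hm : INR m = IZR G) by (rewrite INR_IZR_INZ; f_equal; unfold m; lia).
            assert (Hm2 : INR m / R0 <= tx_t y - t) by (apply div_le_helper; lra).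
            set (U := units R0 j0 (tx_t y - INR m / R0) m).
            assert (HU : forall u, In u U -> tx_slot u = j0 /\ tx_p u = 1%nat /\
                         t <= tx_t u /\ tx_t u < tx_t y /\ tx_end Rt u <= tx_t y).
            { intros u Hu. destruct (units_In _ _ _ _ _ HR0 Hu) as (H1 & H2 & H3 & H4).
              rewrite (units_end Rt j0 u H1 H2). change (Rt j0) with R0.
              assert (0 < 1 / R0) by (apply Rdiv_lt_0_compat; lra).
              repeat split; auto; lra. }
            exists (U ++ [y]). refine (conj _ (conj _ (conj _ (conj _ _)))).
            + apply Forall_app; split.
              * rewrite Forall_forall. intros u Hu. destruct (HU u Hu) as (H1 & H2 & H3 & H4 & H5).
                split; [unfold in_slot | ]; rewrite H1; [lra | lia].
              * constructor; [| constructor]. split; [unfold in_slot; rewrite Hys; lra | rewrite Hys; lia].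
            + apply SS_app.
              * apply ordered_SS, units_ordered; auto.
              * repeat constructor.
              * intros u v Hu [<-|[]]. destruct (HU u Hu) as (H1 & H2 & H3 & H4 & H5). split; lra.
            + intros u Hu. apply in_app_or in Hu as [Hu|[<-|[]]].
              * destruct (HU u Hu) as (H1 & H2 & H3 & H4 & H5). split; lra.
              * split; lra.
            + intros u z Hu Hz. destruct (Hyz z Hz) as [H6 H7].
              apply in_app_or in Hu as [Hu|[<-|[]]].
              * destruct (HU u Hu) as (H1 & H2 & H3 & H4 & H5). split; lra.
              * split; lra.
            + rewrite bits_app. unfold U. rewrite units_bits. simpl. unfold k, m. lia.
          -
            exists [mk_tx t j0 k].
            assert (Hneg : R0 * (tx_t y - t) < 0).
            { assert (0 < R0 * (t - tx_t y)) by (apply Rmult_lt_0_compat; lra).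
              assert (E : R0 * (tx_t y - t) = - (R0 * (t - tx_t y))) by ring. lra. }
            assert (Hkp : (k <= tx_p y)%nat).
            { assert (IZR F < IZR (Z.of_nat (tx_p y))) by (rewrite <- INR_IZR_INZ; lra).
              apply lt_IZR in H. unfold k. lia. }
            assert (Hend : tx_end Rt (mk_tx t j0 k) <= tx_end Rt y).
            { rewrite Hend_y. unfold tx_end, Defs.Delta. simpl. change (Rt j0) with R0.
              assert (INR k / R0 <= tx_t y - t + INR (tx_p y) / R0).
              { apply div_le_helper; auto.
                replace (R0 * (tx_t y - t + INR (tx_p y) / R0)) with
                  (R0 * (tx_t y - t) + INR (tx_p y)) by (field; lra). lra. }
              lra. }
            refine (conj _ (conj _ (conj _ (conj _ _)))).
            + constructor; [| constructor]. split; [unfold in_slot; simpl; lra | simpl; lia].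
            + repeat constructor.
            + intros u [<-|[]]. simpl; split; lra.
            + intros u z [<-|[]] Hz. destruct (Hyz z Hz) as [H6 H7].
              destruct (Hrest z Hz) as (_ & H8 & _). split; simpl; lra.
            + simpl. lia. }
        destruct HC as (C & HC1 & HC2 & HC3 & HC4 & HC5).
        pose proof (Hlow C HC1 HC2 HC3 HC4) as Hl.
        assert (IZR F <= INR (bits C)) by (rewrite <- Hk; apply le_INR; auto).
        assert (INR n * (IZR F + INR Srest) <= INR n * (INR (bits C) + INR (bits rest)))
          by (apply Rmult_le_compat_l; lra).
        lra.
  - set (w1 := window Rt t (theta jf) s1) in *.
    assert (Hw1 : admissible theta Rt pbar w1) by (apply Adm_filter; auto).
    assert (Hb1 : (bits w1 <= bits w)%nat).
    { eapply Nat.le_trans; [apply Wsub | apply UB; auto]. }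
    assert (HDr : INR D = INR n * INR (bits w1)) by (rewrite HD, mult_INR; reflexivity).
    assert (Hn0 : 0 < INR n) by (apply lt_0_INR; lia).
    assert (Hmax1 : INR n * IZR F <= Rmax 0 (INR n * IZR F)) by apply Rmax_r.
    assert (Hmax0 : 0 <= Rmax 0 (INR n * IZR F)) by apply Rmax_l.
    destruct (Nat.eq_dec (pbar j0) 0) as [Hp0|Hp0].
    + specialize (Hpbar0 Hp0).
      assert (INR (bits w1) <= INR Srest) by (apply le_INR; lia).
      assert (INR n * INR (bits w1) <= INR n * INR Srest) by (apply Rmult_le_compat_l; lra).
      lra.
    + set (z := (Z.of_nat phi0 - F - 1)%Z).
      set (k2 := Z.to_nat z).
      set (C2 := units R0 j0 (t - INR k2 / R0) k2).
      assert (Hk2 : (k2 >= 1)%nat -> INR k2 / R0 < t - theta j0).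
      { intros Hk. apply div_lt_helper; auto.
        assert (Hz : (z >= 1)%Z) by lia.
        assert (INR k2 = IZR z) by (rewrite INR_IZR_INZ; f_equal; unfold k2; lia).
        unfold z in H. rewrite !minus_IZR, <- INR_IZR_INZ in H. unfold x in HF2. lra. }
      assert (HC2 : forall u, In u C2 -> tx_slot u = j0 /\ tx_p u = 1%nat /\
                 theta j0 < tx_t u /\ tx_end Rt u <= t).
      { intros u Hu. destruct (units_In _ _ _ _ _ HR0 Hu) as (H1 & H2 & H3 & H4).
        assert (Hk : (k2 >= 1)%nat) by (destruct k2; [contradiction | lia]).
        specialize (Hk2 Hk).
        rewrite (units_end Rt j0 u H1 H2). fold R0. repeat split; auto; lra. }
      assert (Hadm2 : admissible theta Rt pbar (C2 ++ w1)).
      { split.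
        - apply Forall_app; split.
          + rewrite Forall_forall. intros u Hu. destruct (HC2 u Hu) as (H1 & H2 & H3 & H4).
            assert (tx_t u < t).
            { rewrite (units_end Rt j0 u H1 H2) in H4.
              change (Rt j0) with R0 in H4. assert (0 < 1 / R0) by (apply Rdiv_lt_0_compat; lra). lra. }
            split; [unfold in_slot | ]; rewrite H1; [lra | lia].
          + apply Hw1.
        - apply ordered_SS. apply SS_app.
          + apply ordered_SS, units_ordered; auto.
          + apply ordered_SS, Hw1.
          + intros u v Hu Hv. destruct (HC2 u Hu) as (H1 & H2 & H3 & H4).
            unfold w1, window in Hv. apply filter_In in Hv as [_ Hv].
            apply in_windowb_iff in Hv.
            assert (tx_t u < tx_end Rt u).
            { rewrite (units_end Rt j0 u H1 H2).
              change (Rt j0) with R0. assert (0 < 1 / R0) by (apply Rdiv_lt_0_compat; lra). lra. }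
            split; lra. }
      assert (Hwin2 : window Rt (theta j0) (theta jf) (C2 ++ w1) = C2 ++ w1).
      { apply filter_all. intros u Hu. apply in_windowb_iff. apply in_app_or in Hu as [Hu|Hu].
        - destruct (HC2 u Hu) as (H1 & H2 & H3 & H4). split; lra.
        - unfold w1, window in Hu. apply filter_In in Hu as [_ Hu].
          apply in_windowb_iff in Hu. lra. }
      pose proof (UB _ Hadm2) as HU. rewrite Hwin2, bits_app in HU.
      unfold C2 in HU. rewrite units_bits in HU.
      assert (HU' : INR k2 + INR (bits w1) <= INR phi0 + INR Srest).
      { rewrite <- !plus_INR. apply le_INR. lia. }
      assert (Hcase : INR (bits w1) <= IZR F + 1 + INR Srest).
      { destruct (Z_le_gt_dec 0 z) as [Hz|Hz].
        - assert (INR k2 = IZR z) by (rewrite INR_IZR_INZ; f_equal; unfold k2; lia).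
          unfold z in H. rewrite !minus_IZR, <- INR_IZR_INZ in H. lra.
        - assert (INR phi0 <= IZR F).
          { rewrite INR_IZR_INZ. apply IZR_le. unfold z in Hz. lia. }
          assert (INR k2 >= 0) by (apply Rle_ge, pos_INR). lra. }
      assert (INR n * INR (bits w1) <= INR n * (IZR F + 1 + INR Srest))
        by (apply Rmult_le_compat_l; lra).
      lra.
Qed.
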